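(* If $\mathcal{P}$ and $\mathcal{Q}$ are locally finite posets, then $J_\mathcal{P}\times J_\mathcal{Q}=J_{\mathcal{P}\times\mathcal{Q}}$, i.e. for all $(x_1,y_1,z_1)\in\mathcal{F}l^3(\mathcal{P})$ and $(x_2,y_2,z_2)\in\mathcal{F}l^3(\mathcal{Q})$, $$J_{\mathcal{P}\times\mathcal{Q}}\big((x_1,x_2),(y_1,y_2),(z_1,z_2)\big)=J_\mathcal{P}(x_1,y_1,z_1)\,J_\mathcal{Q}(x_2,y_2,z_2).$$
   Context: $\mathcal{P}\times\mathcal{Q}$ has the product order. For a locally finite poset $\mathcal{R}$, $\mathcal{F}l^3(\mathcal{R})=\{(x,y,z)\in\mathcal{R}^3:x\le y\le z\}$, $\delta_3(x,y,z)=1$ if $x=y=z$ and $0$ otherwise, and $J_\mathcal{R}:\mathcal{F}l^3(\mathcal{R})\to\mathbb{Z}$ is the unique function with $\sum_{x\le a\le y\le b\le z}J_\mathcal{R}(a,y,b)=\delta_3(x,y,z)$ for all $(x,y,z)\in\mathcal{F}l^3(\mathcal{R})$ (sum over $a,b\in\mathcal{R}$). *)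

(* Defs.v *)
From HB Require Import structures.
From mathcomp Require Import all_boot all_order all_algebra.
Set Implicit Arguments. Unset Strict Implicit. Unset Printing Implicit Defensive.
Import Order.TTheory GRing.Theory Num.Theory.

Local Open Scope order_scope.

Definition enum_itv (d : Order.disp_t) (T : porderType d) (s : seq T) (x z : T) : Prop :=
  uniq s /\ forall a : T, (a \in s) = (x <= a <= z).

Definition locally_finite (d : Order.disp_t) (T : porderType d) : Prop :=
  forall x z : T, exists s : seq T, enum_itv s x z.

Definition delta3 (d : Order.disp_t) (T : porderType d) (x y z : T) : int :=
  if (x == y) && (y == z) then 1%R else 0%R.

(* [is_J f]: f satisfies the defining identity of J_T on Fl^3(T):
   for all x <= y <= z,
     sum_{x <= a <= y <= b <= z} f(a, y, b) = delta_3(x, y, z). Only the values of f on Fl^3(T) matter. *)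
Definition is_J (d : Order.disp_t) (T : porderType d) (f : T -> T -> T -> int) : Prop :=
  forall (x y z : T) (sxy syz : seq T),
    x <= y -> y <= z -> enum_itv sxy x y -> enum_itv syz y z ->
    (\sum_(a <- sxy) \sum_(b <- syz) f a y b)%R = delta3 x y z.

(* Main.v *)
Require Import Defs.
From HB Require Import structures.
From mathcomp Require Import all_boot all_order all_algebra.
From mathcomp Require Import zify.
Import Order.TTheory GRing.Theory Num.Theory.

Lemma J_unique (d : Order.disp_t) (T : porderType d) (f g : T -> T -> T -> int) :
  is_J f -> is_J g -> forall n (x y z : T) sxy syz,
  (size sxy + size syz < n)%N ->
  (x <= y)%O -> (y <= z)%O -> enum_itv sxy x y -> enum_itv syz y z ->
  f x y z = g x y z.
Proof.
move=> hf hg; elim=> [//|n IH] x y z sxy syz hn xy yz [u1 m1] [u2 m2].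
have key : forall a b, a \in sxy -> b \in syz -> (a != x) || (b != z) ->
    f a y b = g a y b.
  move=> a b; rewrite m1 m2 => /andP[xa ay] /andP[yb bz] hne.
  pose sa := [seq c <- sxy | (a <= c)%O].
  pose sb := [seq c <- syz | (c <= b)%O].
  have ea : enum_itv sa a y.
    split; first exact: filter_uniq.
    move=> c; rewrite mem_filter m1; apply/idP/idP.
      by case/andP=> -> /andP[_ ->].
    case/andP=> ac cy; rewrite ac cy (le_trans xa ac) //.
  have eb : enum_itv sb y b.
    split; first exact: filter_uniq.
    move=> c; rewrite mem_filter m2; apply/idP/idP.
      by case/andP=> -> /andP[-> _].
    case/andP=> yc cb; rewrite yc cb (le_trans cb bz) //.
  apply: (IH a y b sa sb) => //.
  have sza : (size sa <= size sxy)%N by rewrite size_filter count_size.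
  have szb : (size sb <= size syz)%N by rewrite size_filter count_size.
  have Ha : a != x -> (size sa < size sxy)%N.
    move=> ax; rewrite size_filter -(count_predC (fun c => (a <= c)%O) sxy).
    rewrite -addn1 leq_add2l -has_count; apply/hasP; exists x.
      by rewrite m1 lexx xy.
    rewrite /= -/(is_true _); apply/negP => axx; move/negP: ax; apply.
    by apply/eqP/le_anti; rewrite axx xa.
  have Hb : b != z -> (size sb < size syz)%N.
    move=> bz'; rewrite size_filter -(count_predC (fun c => (c <= b)%O) syz).
    rewrite -addn1 leq_add2l -has_count; apply/hasP; exists z.
      by rewrite m2 lexx yz.
    rewrite /= -/(is_true _); apply/negP => zb; move/negP: bz'; apply.
    by apply/eqP/le_anti; rewrite zb bz.
  case/orP: hne => [/Ha|/Hb] h; clearbody sa sb; move: hn h szb sza; clear; move: (size sa) (size sb) (size sxy) (size syz) => p q r s; lia.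
have E : (\sum_(a <- sxy) \sum_(b <- syz) (f a y b - g a y b))%R = 0%R.
  under eq_bigr do rewrite sumrB.
  by rewrite sumrB (hf x y z) // (hg x y z) // subrr.
have xin : x \in sxy by rewrite m1 lexx xy.
have zin : z \in syz by rewrite m2 lexx yz.
rewrite (bigD1_seq x) //= (bigD1_seq z) //= in E.
rewrite [X in (_ + X + _)%R]big1_seq ?addr0 in E; last first.
  move=> b /andP[bz bin]; rewrite (key x b) ?subrr // bz orbT //.
rewrite big1_seq ?addr0 in E; last first.
  move=> a /andP[ax ain]; rewrite big1_seq // => b /andP[_ bin].
  by rewrite (key a b) ?subrr // ax.
by apply/eqP; rewrite -subr_eq0 E.
Qed.

Section Prod.
Variables (d1 d2 : Order.disp_t) (P : porderType d1) (Q : porderType d2).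
Local Notation PQ := (P *p Q)%type.

Definition pairs (s1 : seq P) (s2 : seq Q) : seq PQ :=
  [seq ((a, b) : PQ) | a <- s1, b <- s2].

Lemma enum_pairs (s1 : seq P) (s2 : seq Q) (x z : PQ) :
  enum_itv s1 x.1 z.1 -> enum_itv s2 x.2 z.2 -> enum_itv (pairs s1 s2) x z.
Proof.
move=> [u1 m1] [u2 m2]; split.
  apply: allpairs_uniq => // [[a b]] [a' b'] _ _ /= [-> ->] //.
case=> a b; apply/allpairsP/idP.
  case=> [[a' b']] /= [ha hb [-> ->]].
  by rewrite !leEprod /=; move: ha hb; rewrite m1 m2 => /andP[-> ->] /andP[-> ->].
rewrite !leEprod /= => /andP[/andP[h1 h2] /andP[h3 h4]].
by exists (a, b); rewrite /= m1 m2 h1 h2 h3 h4.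
Qed.

Lemma sum_pairs (s : seq PQ) (s1 : seq P) (s2 : seq Q) (x z : PQ) (F : PQ -> int) :
  enum_itv s x z -> enum_itv s1 x.1 z.1 -> enum_itv s2 x.2 z.2 ->
  (\sum_(a <- s) F a = \sum_(a1 <- s1) \sum_(a2 <- s2) F (a1, a2))%R.
Proof.
move=> [u m] e1 e2; have [u' m'] := @enum_pairs s1 s2 x z e1 e2.
rewrite (perm_big (pairs s1 s2)); last by apply: uniq_perm => // c; rewrite m m'.
by rewrite /pairs big_allpairs.
Qed.

End Prod.

Theorem proposition5p5
  (d1 d2 : Order.disp_t) (P : porderType d1) (Q : porderType d2)
  (lfP : locally_finite P) (lfQ : locally_finite Q)
  (JP : P -> P -> P -> int) (JQ : Q -> Q -> Q -> int)
  (JPQ : (P *p Q)%type -> (P *p Q)%type -> (P *p Q)%type -> int)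
  (hJP : is_J JP) (hJQ : is_J JQ) (hJPQ : is_J JPQ)
  (x1 y1 z1 : P) (x2 y2 z2 : Q) :
  (x1 <= y1)%O -> (y1 <= z1)%O -> (x2 <= y2)%O -> (y2 <= z2)%O ->
  JPQ (x1, x2) (y1, y2) (z1, z2) = (JP x1 y1 z1 * JQ x2 y2 z2)%R.
Proof.
move=> h1 h2 h3 h4.
pose G (a y b : (P *p Q)%type) := (JP a.1 y.1 b.1 * JQ a.2 y.2 b.2)%R.
have hG : is_J G.
  move=> x y z sxy syz xy yz exy eyz.
  have [xy1 xy2] : (x.1 <= y.1)%O /\ (x.2 <= y.2)%O.
    by move: xy; rewrite leEprod => /andP[].
  have [yz1 yz2] : (y.1 <= z.1)%O /\ (y.2 <= z.2)%O.
    by move: yz; rewrite leEprod => /andP[].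
  have [s1 e1] := lfP x.1 y.1; have [s2 e2] := lfQ x.2 y.2.
  have [t1 f1] := lfP y.1 z.1; have [t2 f2] := lfQ y.2 z.2.
  rewrite (@sum_pairs _ _ _ _ _ _ _ _ _ _ exy e1 e2).
  under eq_bigr do under eq_bigr do rewrite (@sum_pairs _ _ _ _ _ _ _ _ _ _ eyz f1 f2).
  rewrite /G /=.
  under eq_bigr do rewrite exchange_big /=.
  under eq_bigr do under eq_bigr do under eq_bigr do rewrite -mulr_sumr.
  under eq_bigr do under eq_bigr do rewrite -mulr_sumr.
  under eq_bigr do rewrite -mulr_suml.
  rewrite -mulr_suml (hJP _ _ _ _ _ xy1 yz1 e1 f1) (hJQ _ _ _ _ _ xy2 yz2 e2 f2).
  rewrite /delta3.
  case: x y z {xy yz exy eyz xy1 xy2 yz1 yz2 e1 e2 f1 f2} => [a1 a2] [b1 b2] [c1 c2] /=.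
  rewrite -!pair_eqE /=.
  by case: (a1 == b1); case: (b1 == c1); case: (a2 == b2); case: (b2 == c2);
    rewrite ?mul1r ?mul0r.
have [s1 e1] := lfP x1 y1; have [s2 e2] := lfQ x2 y2.
have [t1 f1] := lfP y1 z1; have [t2 f2] := lfQ y2 z2.
have exy := @enum_pairs _ _ P Q s1 s2 (x1, x2) (y1, y2) e1 e2.
have eyz := @enum_pairs _ _ P Q t1 t2 (y1, y2) (z1, z2) f1 f2.
rewrite (@J_unique _ _ _ _ hJPQ hG _ _ _ _ _ _ (ltnSn _) _ _ exy eyz) //.
  by rewrite leEprod /= h1 h3.
by rewrite leEprod /= h2 h4.
Qed.
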